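(* For all $n\ge1$, $$a_{\{0101,0102,0120,0121\}}(n)=a_{\{0102,0112,0120,0121\}}(n)=2^{n-1}+\binom{n-1}{2}.$$
   Context: An ascent in an integer sequence $s_1\cdots s_m$ is an index $j$ with $s_j<s_{j+1}$; $\mathrm{asc}$ denotes the number of ascents. An ascent sequence is a sequence $x_1\cdots x_n$ of nonnegative integers with $x_1=0$ and $x_i\le 1+\mathrm{asc}(x_1\cdots x_{i-1})$ for all $i\ge2$. The reduction $\mathrm{red}(w)$ of an integer sequence $w$ replaces the $i$-th smallest distinct letter of $w$ by $i-1$; a pattern is a reduced sequence. A sequence $x$ contains a pattern $p=p_1\cdots p_k$ if there are indices $i_1<\cdots<i_k$ with $\mathrm{red}(x_{i_1}\cdots x_{i_k})=p$; otherwise $x$ avoids $p$. For a finite set $P$ of patterns, $a_P(n)$ denotes the number of ascent sequences of length $n$ avoiding every pattern in $P$. *)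

(* Defs.v *)
From mathcomp Require Import all_boot.
Set Implicit Arguments. Unset Strict Implicit. Unset Printing Implicit Defensive.

Fixpoint asc (s : seq nat) : nat :=
  match s with
  | a :: ((b :: _) as t) => (a < b) + asc t
  | _ => 0
  end.

Definition is_ascent_seq (x : seq nat) : bool :=
  (head 0 x == 0) &&
  [forall i : 'I_(size x), (0 < i) ==> (nth 0 x i <= (asc (take i x)).+1)].

Definition red (w : seq nat) : seq nat :=
  [seq size (undup [seq y <- w | y < v]) | v <- w].

Definition contains (x p : seq nat) : bool :=
  [exists m : (size x).-tuple bool, red (mask m x) == p].

Definition avoids_all (P : seq (seq nat)) (x : seq nat) : bool :=
  all (fun p => ~~ contains x p) P.

(* a_P(n): number of ascent sequences of length n avoiding every pattern of P.
   Entries of an ascent sequence of length n are < n, so they are enumerated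
   as n-tuples over 'I_n. *)
Definition aP (P : seq (seq nat)) (n : nat) : nat :=
  #|[set t : n.-tuple 'I_n |
      is_ascent_seq (map val t) &
      avoids_all P (map val t) ]|.

(* Main.v *)
Require Import Defs.
From mathcomp Require Import all_boot zify.
Set Implicit Arguments. Unset Strict Implicit. Unset Printing Implicit Defensive.

Definition rf (w : seq nat) (v : nat) := size (undup [seq y <- w | y < v]).

Lemma redE w : red w = map (rf w) w.
Proof. by []. Qed.

Lemma rf_mono w v u : v <= u -> rf w v <= rf w u.
Proof.
move=> vu; apply: uniq_leq_size; first exact: undup_uniq.
move=> y; rewrite !mem_undup !mem_filter => /andP[yv ->].
by rewrite (leq_trans yv vu).
Qed.

Lemma rf_strict w v u : v \in w -> v < u -> rf w v < rf w u.
Proof.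
move=> vw vu; rewrite /rf -[_.+1]/(size (v :: undup [seq y <- w | y < v])).
apply: uniq_leq_size.
  by rewrite /= undup_uniq mem_undup mem_filter ltnn.
move=> y; rewrite inE !mem_undup !mem_filter => /orP[/eqP->|/andP[yv ->]].
  by rewrite vu vw.
by rewrite (ltn_trans yv vu).
Qed.

Lemma rf_ltE w v u : v \in w -> (rf w v < rf w u) -> v < u.
Proof.
move=> vw; case: (ltnP v u) => // uv.
by rewrite ltnNge rf_mono.
Qed.

Lemma rf_eqE w v u : v \in w -> u \in w -> rf w v = rf w u -> v = u.
Proof.
move=> vw uw e; case: (ltngtP v u) => // h.
  by have := rf_strict vw h; rewrite e ltnn.
by have := rf_strict uw h; rewrite e ltnn.
Qed.

Lemma rf_bin w v : all (fun y => y <= 1) w -> v <= 1 -> rf w v <= 1.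
Proof.
move=> /allP aw v1; rewrite /rf.
apply: (@uniq_leq_size _ _ [:: 0]); first exact: undup_uniq.
move=> y; rewrite mem_undup mem_filter inE => /andP[yv _].
by rewrite -leqn0 -ltnS (leq_trans yv v1).
Qed.

Lemma containsP x p : reflect (exists s, subseq s x /\ red s = p) (contains x p).
Proof.
apply: (iffP existsP) => [[m /eqP <-]|[s [/subseqP [m sm ->] <-]]].
  by exists (mask m x); split=> //; exact: mask_subseq.
by exists (Tuple (introT eqP sm)).
Qed.

Lemma contains4 x p0 p1 p2 p3 : contains x [:: p0; p1; p2; p3] ->
  exists a b c d, subseq [:: a; b; c; d] x /\
    let s := [:: a; b; c; d] in
    [/\ rf s a = p0, rf s b = p1, rf s c = p2 & rf s d = p3].
Proof.
case/containsP => s [ss]; rewrite redE.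
case: s ss => [|a [|b [|c [|d [|e s]]]]] //= ss [] e0 e1 e2 e3 //.
by exists a, b, c, d; split.
Qed.

Lemma contains_rcons x v p : contains x p -> contains (rcons x v) p.
Proof.
case/containsP => s [ss rs]; apply/containsP; exists s; split=> //.
apply: subseq_trans ss _; exact: subseq_rcons.
Qed.

Lemma contains_sub x s p : subseq s x -> red s = p -> contains x p.
Proof. by move=> ss rs; apply/containsP; exists s. Qed.

Lemma forall_iota n (Q : nat -> bool) :
  [forall i : 'I_n, Q i] = all Q (iota 0 n).
Proof.
apply/forallP/allP => [h i|h i]; last by apply: h; rewrite mem_iota /=.
by rewrite mem_iota /= => lin; exact: (h (Ordinal lin)).
Qed.

Definition ascQ (x : seq nat) i := (0 < i) ==> (nth 0 x i <= (asc (take i x)).+1).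

Lemma ascentE x : is_ascent_seq x = (head 0 x == 0) && all (ascQ x) (iota 0 (size x)).
Proof. by rewrite /is_ascent_seq -forall_iota. Qed.

Lemma ascent_rcons y v : y != [::] ->
  is_ascent_seq (rcons y v) = is_ascent_seq y && (v <= (asc y).+1).
Proof.
move=> yn; rewrite !ascentE size_rcons -addn1 iotaD all_cat /= andbT.
have -> : head 0 (rcons y v) = head 0 y by case: y yn.
have -> : all (ascQ (rcons y v)) (iota 0 (size y)) = all (ascQ y) (iota 0 (size y)).
  apply: eq_in_all => i; rewrite mem_iota /= => lt.
  by rewrite /ascQ nth_rcons lt -cats1 takel_cat // ltnW.
rewrite /ascQ nth_rcons ltnn eqxx -cats1 take_size_cat //.
have -> : 0 < size y by case: y yn.
by rewrite andbA.
Qed.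

Lemma ascent1 v : is_ascent_seq [:: v] = (v == 0).
Proof. by rewrite ascentE /= /ascQ /= andbT. Qed.

Lemma asc_cat x s y t :
  asc (x :: s ++ y :: t) = asc (x :: s) + (last x s < y) + asc (y :: t).
Proof.
have e a b r : asc (a :: b :: r) = (a < b) + asc (b :: r) by [].
elim: s x => [|z s IH] x; first by rewrite e.
by rewrite cat_cons e IH e /= !addnA.
Qed.

Lemma asc_nseq n k : asc (nseq n k) = 0.
Proof. by elim: n => [|[|n] IH] //=; rewrite ltnn. Qed.

Lemma asc_lt x : x != [::] -> asc x < size x.
Proof.
elim: x => [|a [|b x] IH] //= _.
have h := IH isT.
change (asc (a :: b :: x)) with ((a < b) + asc (b :: x)).
by case: (a < b); rewrite ?add1n ?add0n ?ltnS // leqW.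
Qed.

Lemma ascent_bound x : is_ascent_seq x -> all (fun y => y < size x) x.
Proof.
elim/last_ind: x => [|y v IH] //.
case: (altP (y =P [::])) => [->|yn]; first by rewrite ascent1 => /eqP ->.
rewrite ascent_rcons // => /andP[ay vb].
rewrite all_rcons size_rcons ltnS (leq_trans vb) ?(asc_lt yn) //=.
by apply: sub_all (IH ay) => z /ltnW.
Qed.

Lemma avoids_rcons P y v : avoids_all P (rcons y v) -> avoids_all P y.
Proof.
move=> /allP h; apply/allP => p pP; apply/negP => c.
by have := h p pP; rewrite (contains_rcons v c).
Qed.

Lemma aP_size P n L : uniq L -> (forall x, x \in L -> size x = n) ->
  (forall x, size x = n -> (is_ascent_seq x && avoids_all P x) = (x \in L)) ->
  aP P n = size L.
Proof.
move=> uL sL hL; rewrite /aP.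
set A := [set t : n.-tuple 'I_n | _ & _].
have inj : injective (fun t : n.-tuple 'I_n => map val (val t)).
  move=> t1 t2 /= e; apply: val_inj; exact: (inj_map val_inj e).
rewrite cardE -(size_map (fun t : n.-tuple 'I_n => map val (val t))).
apply: perm_size; apply: uniq_perm; first by rewrite (map_inj_uniq inj) enum_uniq.
  by [].
move=> y; apply/mapP/idP => [[t]|yL].
  rewrite mem_enum inE => h ->; rewrite -hL //.
  by rewrite size_map size_tuple.
have sy := sL y yL.
have ab : all (fun z => z < n) y.
  by move: yL; rewrite -hL // => /andP[/ascent_bound]; rewrite sy.
have e : map val (pmap (insub : nat -> option 'I_n) y) = y.
  rewrite (pmap_filter (insubK _)); apply/all_filterP. by apply: sub_all ab => z zn; case: insubP => [//|]; rewrite zn.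
have st : size (pmap (insub : nat -> option 'I_n) y) == n.
  by rewrite -(size_map val) e sy.
exists (Tuple st); last by rewrite /= e.
by rewrite mem_enum inE /= e hL.
Qed.

Lemma red0101 b : 0 < b -> red [:: 0; b; 0; b] = [:: 0; 1; 0; 1].
Proof. by move=> H0; rewrite /red /= ltnn H0. Qed.
Lemma red0102 b c : 0 < b -> b < c -> red [:: 0; b; 0; c] = [:: 0; 1; 0; 2].
Proof.
move=> H0 bc.
have c0 : 0 < c by exact: ltn_trans H0 bc.
have cb : (c < b) = false by rewrite ltnNge ltnW.
have e1 : (b == 0) = false by rewrite gtn_eqF.
have e2 : (0 == b) = false by rewrite eq_sym gtn_eqF.
have e3 : (c == 0) = false by rewrite gtn_eqF.
have e4 : (0 == c) = false by rewrite eq_sym gtn_eqF.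
have e5 : (c == b) = false by rewrite gtn_eqF.
have e6 : (b == c) = false by rewrite ltn_eqF.
rewrite /red /= !(ltnn, H0, bc, c0, cb, e1, e2, e3, e4, e5, e6, inE, eqxx) /=
   ?(ltnn, H0, bc, c0, cb, e1, e2, e3, e4, e5, e6, inE, eqxx) //.
Qed.
Lemma red0120 b c : 0 < b -> b < c -> red [:: 0; b; c; 0] = [:: 0; 1; 2; 0].
Proof.
move=> H0 bc.
have c0 : 0 < c by exact: ltn_trans H0 bc.
have cb : (c < b) = false by rewrite ltnNge ltnW.
have e1 : (b == 0) = false by rewrite gtn_eqF.
have e2 : (0 == b) = false by rewrite eq_sym gtn_eqF.
have e3 : (c == 0) = false by rewrite gtn_eqF.
have e4 : (0 == c) = false by rewrite eq_sym gtn_eqF.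
have e5 : (c == b) = false by rewrite gtn_eqF.
have e6 : (b == c) = false by rewrite ltn_eqF.
rewrite /red /= !(ltnn, H0, bc, c0, cb, e1, e2, e3, e4, e5, e6, inE, eqxx) /=
   ?(ltnn, H0, bc, c0, cb, e1, e2, e3, e4, e5, e6, inE, eqxx) //.
Qed.
Lemma red0121 b c : 0 < b -> b < c -> red [:: 0; b; c; b] = [:: 0; 1; 2; 1].
Proof.
move=> H0 bc.
have c0 : 0 < c by exact: ltn_trans H0 bc.
have cb : (c < b) = false by rewrite ltnNge ltnW.
have e1 : (b == 0) = false by rewrite gtn_eqF.
have e2 : (0 == b) = false by rewrite eq_sym gtn_eqF.
have e3 : (c == 0) = false by rewrite gtn_eqF.
have e4 : (0 == c) = false by rewrite eq_sym gtn_eqF.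
have e5 : (c == b) = false by rewrite gtn_eqF.
have e6 : (b == c) = false by rewrite ltn_eqF.
rewrite /red /= !(ltnn, H0, bc, c0, cb, e1, e2, e3, e4, e5, e6, inE, eqxx) /=
   ?(ltnn, H0, bc, c0, cb, e1, e2, e3, e4, e5, e6, inE, eqxx) //.
Qed.
Lemma red0112 b c : 0 < b -> b < c -> red [:: 0; b; b; c] = [:: 0; 1; 1; 2].
Proof.
move=> H0 bc.
have c0 : 0 < c by exact: ltn_trans H0 bc.
have cb : (c < b) = false by rewrite ltnNge ltnW.
have e1 : (b == 0) = false by rewrite gtn_eqF.
have e2 : (0 == b) = false by rewrite eq_sym gtn_eqF.
have e3 : (c == 0) = false by rewrite gtn_eqF.
have e4 : (0 == c) = false by rewrite eq_sym gtn_eqF.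
have e5 : (c == b) = false by rewrite gtn_eqF.
have e6 : (b == c) = false by rewrite ltn_eqF.
rewrite /red /= !(ltnn, H0, bc, c0, cb, e1, e2, e3, e4, e5, e6, inE, eqxx) /=
   ?(ltnn, H0, bc, c0, cb, e1, e2, e3, e4, e5, e6, inE, eqxx) //.
Qed.

Definition step (a b : nat) := (b == a) || (b == a.+1).
Definition spath (x : seq nat) :=
  if x is a :: x' then (a == 0) && path step a x' else false.

Lemma step_leq : subrel step leq.
Proof. by move=> a b /orP[] /eqP ->. Qed.

Lemma path_leq_last a s z : path leq a s -> z \in a :: s -> z <= last a s.
Proof.
elim: s a z => [|b s IH] a z /=; first by rewrite inE => _ /eqP ->.
move=> /andP[ab ps]; rewrite inE => /orP[/eqP ->|zs].
  by apply: leq_trans ab (IH b b ps _); rewrite inE eqxx.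
exact: IH.
Qed.

Lemma spath_sorted x : spath x -> sorted leq x.
Proof. by case: x => //= a s /andP[_]; apply: (sub_path step_leq). Qed.

Lemma spath_le x z : spath x -> z \in x -> z <= last 0 x.
Proof.
case: x => //= a s /andP[/eqP -> ps] zs.
by apply: path_leq_last (sub_path step_leq ps) _.
Qed.

Lemma path_step_asc a s : path step a s -> asc (a :: s) = last a s - a.
Proof.
elim: s a => [|b s IH] a; first by rewrite /= subnn.
move=> /andP[ab ps]; rewrite [last a _]/=.
have lb := path_leq_last (sub_path step_leq ps) (mem_head b s).
change (asc (a :: b :: s)) with ((a < b) + asc (b :: s)); rewrite IH //.
case/orP: ab => /eqP eb; subst b; first by rewrite ltnn add0n.
by rewrite ltnSn add1n subnSK.
Qed.

Lemma spath_asc x : spath x -> asc x = last 0 x.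
Proof. by case: x => // a s /andP[/eqP -> ps]; rewrite path_step_asc // subn0. Qed.

Lemma path_step_subseq a s t : path step a s -> sorted ltn t ->
  all (fun z => (a <= z) && (z <= last a s)) t -> subseq t (a :: s).
Proof.
elim: s a t => [|b s IH] a t ps st hat.
  case: t st hat => [|z [|w t]] st hat; first by rewrite sub0seq.
    move: hat => /andP[/andP[az za] _]; have -> : z = a by apply/eqP; rewrite eqn_leq az za.
    by rewrite sub1seq mem_head.
  move: st hat => /andP[zw _] /and3P[/andP[az za] /andP[aw wa] _].
  by have := leq_trans zw wa; rewrite ltnNge az.
move: ps => /andP[ab ps].
have ba : b <= a.+1 by case/orP: ab => /eqP ->.
case: t st hat => [|z t] st hat; first by rewrite sub0seq.
move: hat => /andP[/andP[az zl] hat].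
have tz := allP (order_path_min ltn_trans st).
case: (eqVneq z a) => [za|za].
  subst z; rewrite /= eqxx; apply: IH => //; first exact: path_sorted st.
  apply/allP => w wt; have /andP[_ ->] := allP hat w wt; rewrite andbT.
  by apply: leq_trans ba _; exact: tz.
have az' : a < z by rewrite ltn_neqAle az eq_sym za.
rewrite /= (negbTE za); apply: (IH b (z :: t)) => //.
apply/andP; split; first by rewrite zl (leq_trans ba).
apply/allP => w wt; have /andP[_ ->] := allP hat w wt; rewrite andbT.
by apply: leq_trans ba _; apply: leq_trans az' (ltnW (tz w wt)).
Qed.

Lemma spath_subseq x t : spath x -> sorted ltn t -> all (fun z => z <= last 0 x) t ->
  subseq t x.
Proof.
case: x => //= a s /andP[/eqP -> ps] st hat.
by apply: path_step_subseq => //; apply: sub_all hat => z ->.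
Qed.

Lemma spath_rcons y v : spath y -> step (last 0 y) v -> spath (rcons y v).
Proof. by case: y => //= a s /andP[-> ps] sv; rewrite rcons_path ps sv. Qed.

Lemma spath_rconsE y v : spath (rcons y v) -> y != [::] -> spath y /\ step (last 0 y) v.
Proof. by case: y => //= a s /andP[-> ]; rewrite rcons_path => /andP[-> ->]. Qed.

Lemma spath_ascent x : spath x -> is_ascent_seq x.
Proof.
elim/last_ind: x => [|y v IH] //.
case: (altP (y =P [::])) => [->|yn]; first by rewrite ascent1 /= andbT.
move=> /spath_rconsE /(_ yn) [sy st]; rewrite ascent_rcons // IH //= spath_asc //.
by case/orP: st => /eqP ->.
Qed.

Lemma last_nseq (T : Type) (x : T) n : last x (nseq n x) = x.
Proof. by elim: n. Qed.

Lemma nseqSr (T : Type) (x : T) n : nseq n.+1 x = rcons (nseq n x) x.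
Proof. by elim: n => //= n <-. Qed.

Lemma path_nseq k n : path step k (nseq n k).
Proof. by elim: n => //= n ->; rewrite /step eqxx. Qed.

Lemma subseq_rcons2 (s y : seq nat) v : subseq s y -> subseq (rcons s v) (rcons y v).
Proof. by move=> ss; rewrite -!cats1 cat_subseq. Qed.

Lemma sorted4 x a b c d : sorted leq x -> subseq [:: a; b; c; d] x ->
  [/\ a <= b, b <= c & c <= d].
Proof.
move=> sx ss; have := subseq_sorted leq_trans ss sx.
by rewrite /= => /and4P[-> -> -> _].
Qed.

Lemma bin_rf x s z : all (fun y => y <= 1) x -> subseq s x -> z \in s -> rf s z <= 1.
Proof.
move=> bx ss zs.
have bs : all (fun y => y <= 1) s.
  by apply/allP => y ys; apply: (allP bx); exact: (mem_subseq ss).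
by apply: (rf_bin bs); exact: (allP bs).
Qed.

Lemma avoid_contra P x p : avoids_all P x -> p \in P -> contains x p -> False.
Proof. by move=> /allP h pP c; have := h p pP; rewrite c. Qed.

Definition shapeII (x : seq nat) := exists a b c,
  [/\ 0 < a, 0 < b, 0 < c & x = nseq a 0 ++ nseq b 1 ++ nseq c 0].

Lemma spath01 a b : spath (nseq a.+1 0 ++ nseq b.+1 1).
Proof.
rewrite [spath _]/= cat_path path_nseq last_nseq /=.
by rewrite /step /= path_nseq.
Qed.

Lemma sub00 (s t : seq nat) : subseq (0 :: s) (0 :: t) = subseq s t.
Proof. by []. Qed.
Lemma sub11 (s t : seq nat) : subseq (1 :: s) (1 :: t) = subseq s t.
Proof. by []. Qed.
Lemma sub10 (s t : seq nat) : subseq (1 :: s) (0 :: t) = subseq (1 :: s) t.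
Proof. by []. Qed.
Lemma sub01 (s t : seq nat) : subseq (0 :: s) (1 :: t) = subseq (0 :: s) t.
Proof. by []. Qed.

Lemma skip0 t a r : subseq (1 :: t) (nseq a 0 ++ r) = subseq (1 :: t) r.
Proof. by elim: a. Qed.
Lemma skip1 t a r : subseq (0 :: t) (nseq a 1 ++ r) = subseq (0 :: t) r.
Proof. by elim: a. Qed.

Lemma no1_zeros t c : subseq (1 :: t) (nseq c 0) = false.
Proof. by elim: c. Qed.

Lemma no01 t b c : subseq (0 :: 1 :: t) (nseq b 1 ++ nseq c 0) = false.
Proof.
rewrite skip1; case: c => [|c] //; rewrite [nseq _ _]/= sub00; exact: no1_zeros.
Qed.

Lemma no0101 a b c : subseq [:: 0; 1; 0; 1] (nseq a 0 ++ nseq b 1 ++ nseq c 0) = false.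
Proof.
case: a => [|a]; first exact: no01.
rewrite [nseq _ _]/= cat_cons sub00 skip0.
case: b => [|b]; first by rewrite no1_zeros.
rewrite [nseq _ _]/= cat_cons sub11; exact: no01.
Qed.

Notation P1 := [:: [:: 0; 1; 0; 1]; [:: 0; 1; 0; 2]; [:: 0; 1; 2; 0]; [:: 0; 1; 2; 1]].

Lemma asc_II a b c : asc (nseq a.+1 0 ++ nseq b.+1 1 ++ nseq c.+1 0) = 1.
Proof.
rewrite -[nseq a.+1 0]/(0 :: nseq a 0) -[nseq b.+1 1]/(1 :: nseq b 1) cat_cons asc_cat.
rewrite -[nseq c.+1 0]/(0 :: nseq c 0) asc_cat.
have h k n : asc (k :: nseq n k) = 0 by exact: (asc_nseq n.+1 k).
by rewrite !h !last_nseq.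
Qed.

Lemma II_bin x : shapeII x -> all (fun y => y <= 1) x.
Proof.
case=> a [b [c [_ _ _ ->]]]; rewrite !all_cat.
by apply/and3P; split; apply/allP => y /nseqP [-> _].
Qed.

Lemma II_ascent x : shapeII x -> is_ascent_seq x.
Proof.
case=> a [b [c [a0 b0 c0 ->]]].
case: a a0 => // a _; case: b b0 => // b _; case: c c0 => // c _.
elim: c => [|c IH].
  rewrite -[nseq 1 0]/[:: 0] catA cats1 ascent_rcons //.
  by rewrite spath_ascent ?spath01.
rewrite (nseqSr 0 c.+1) -cats1 !catA cats1 ascent_rcons //.
by rewrite -catA IH.
Qed.

Lemma m4a (a b c d : nat) : a \in [:: a; b; c; d]. Proof. by rewrite inE eqxx. Qed.
Lemma m4b (a b c d : nat) : b \in [:: a; b; c; d]. Proof. by rewrite !inE eqxx !orbT. Qed.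
Lemma m4c (a b c d : nat) : c \in [:: a; b; c; d]. Proof. by rewrite !inE eqxx !orbT. Qed.
Lemma m4d (a b c d : nat) : d \in [:: a; b; c; d]. Proof. by rewrite !inE eqxx !orbT. Qed.

Lemma spath_avoid1 x : spath x -> avoids_all P1 x.
Proof.
move=> sx; have so := spath_sorted sx.
rewrite /avoids_all /=; rewrite !andbT; apply/and4P; split; apply/negP;
  move=> /contains4 [a [b [c [d [ss [e0 e1 e2 e3]]]]]];
  have [ab bc cd] := sorted4 so ss.
- have : rf [:: a; b; c; d] c < rf [:: a; b; c; d] b by rewrite e1 e2.
  by move/(rf_ltE (m4c _ _ _ _)); rewrite ltnNge bc.
- have : rf [:: a; b; c; d] c < rf [:: a; b; c; d] b by rewrite e1 e2.
  by move/(rf_ltE (m4c _ _ _ _)); rewrite ltnNge bc.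
- have : rf [:: a; b; c; d] d < rf [:: a; b; c; d] c by rewrite e3 e2.
  by move/(rf_ltE (m4d _ _ _ _)); rewrite ltnNge cd.
- have : rf [:: a; b; c; d] d < rf [:: a; b; c; d] c by rewrite e3 e2.
  by move/(rf_ltE (m4d _ _ _ _)); rewrite ltnNge cd.
Qed.

Lemma II_avoid1 x : shapeII x -> avoids_all P1 x.
Proof.
move=> hx; have bx := II_bin hx.
rewrite /avoids_all /=; rewrite !andbT; apply/and4P; split; apply/negP;
  move=> /contains4 [a [b [c [d [ss [e0 e1 e2 e3]]]]]].
- have sa := m4a a b c d; have sb := m4b a b c d.
  have sc := m4c a b c d; have sd := m4d a b c d.
  have ab : a < b by apply: (rf_ltE sa); rewrite e0 e1.
  have ac : a = c by apply: (rf_eqE sa sc); rewrite e0 e2.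
  have bd : b = d by apply: (rf_eqE sb sd); rewrite e1 e3.
  have b1 : b <= 1 by apply: (allP bx); exact: (mem_subseq ss).
  have a0 : a = 0 by apply/eqP; rewrite -leqn0 -ltnS (leq_trans ab b1).
  have b1' : b = 1 by apply/eqP; rewrite eqn_leq b1 (leq_ltn_trans (leq0n a) ab).
  subst; case: hx ss => a' [b' [c' [_ _ _ ->]]].
  by rewrite no0101.
- by have := bin_rf bx ss (m4d _ _ _ _); rewrite e3.
- by have := bin_rf bx ss (m4c _ _ _ _); rewrite e2.
- by have := bin_rf bx ss (m4c _ _ _ _); rewrite e2.
Qed.

Lemma path_step1 s : path step 1 s -> last 1 s = 1 -> s = nseq (size s) 1.
Proof.
move=> ps l1; apply/all_pred1P/allP => z zs.
have pl := sub_path step_leq ps.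
have h1 : z <= 1 by rewrite -[X in _ <= X]l1; apply: path_leq_last pl _; rewrite inE zs orbT.
have h2 := allP (order_path_min leq_trans pl) z zs.
by rewrite /= eqn_leq h1 h2.
Qed.

Lemma path_step0 s : path step 0 s -> last 0 s = 1 ->
  exists a b, s = nseq a 0 ++ nseq b.+1 1.
Proof.
elim: s => [|e s IH] //= /andP[se ps] ls.
case/orP: se => /eqP ee; subst e.
  by have [a [b ->]] := IH ps ls; exists a.+1, b.
exists 0, (size s) => /=; congr (_ :: _); exact: path_step1.
Qed.

Lemma spath_last1 y : spath y -> last 0 y = 1 ->
  exists a b, y = nseq a.+1 0 ++ nseq b.+1 1.
Proof.
case: y => // e s /= /andP[/eqP -> ps] ls.
by have [a [b ->]] := path_step0 ps ls; exists a, b.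
Qed.

Lemma P1_char x : x != [::] -> is_ascent_seq x -> avoids_all P1 x ->
  spath x \/ shapeII x.
Proof.
elim/last_ind: x => [|y v IH] // _.
case: (altP (y =P [::])) => [->|yn].
  by rewrite ascent1 => /eqP -> _; left.
rewrite ascent_rcons // => /andP[ay vb] av.
have ay' := avoids_rcons av.
case: (IH yn ay ay') => [sy|[a [b [c [a0 b0 c0 ey]]]]].
  rewrite spath_asc // in vb; set m := last 0 y in vb.
  case: (ltngtP v m) => vm.
  - case: (posnP v) => v0.
      subst v; case: (ltngtP m 1) => m1.
      + by move: vm; rewrite -/m; case: (m) m1.
      + exfalso; apply: (avoid_contra av (_ : [:: 0; 1; 2; 0] \in P1)) => //.
        apply: (contains_sub _ (red0120 (isT : 0 < 1) m1)).
        rewrite -[[:: 0; 1; m; 0]]/(rcons [:: 0; 1; m] 0); apply: subseq_rcons2.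
        apply: spath_subseq sy _ _ => //=; first by rewrite m1.
        by rewrite leqnn !andbT ltnW.
      + right; have [a [b ey]] := spath_last1 sy m1.
        exists a.+1, b.+1, 1; split => //.
        by rewrite ey -cats1 -catA.
    exfalso; apply: (avoid_contra av (_ : [:: 0; 1; 2; 1] \in P1)) => //.
    apply: (contains_sub _ (red0121 v0 vm)).
    rewrite -[[:: 0; v; m; v]]/(rcons [:: 0; v; m] v); apply: subseq_rcons2.
    apply: spath_subseq sy _ _ => //=; first by rewrite v0 vm.
    by rewrite leqnn (ltnW vm).
  - left; apply: spath_rcons sy _; rewrite /step.
    have -> : v = (last 0 y).+1 by apply/eqP; rewrite eqn_leq vb vm.
    by rewrite eqxx orbT.
  - by left; apply: spath_rcons sy _; rewrite /step vm eqxx.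
case: a a0 ey => // a _; case: b b0 => // b _; case: c c0 => // c _ ey.
have s010 : subseq [:: 0; 1; 0] y.
  rewrite ey -[[:: 0; 1; 0]]/([:: 0] ++ [:: 1] ++ [:: 0]).
  by apply: cat_subseq; [|apply: cat_subseq]; rewrite sub1seq mem_nseq.
rewrite ey asc_II in vb.
case: v vb av => [|[|[|v]]] // vb av.
- by right; exists a.+1, b.+1, c.+2; split => //; rewrite ey !rcons_cat -nseqSr.
- exfalso; apply: (avoid_contra av (_ : [:: 0; 1; 0; 1] \in P1)) => //.
  apply: (contains_sub _ (red0101 (isT : 0 < 1))).
  rewrite -[[:: 0; 1; 0; 1]]/(rcons [:: 0; 1; 0] 1); exact: subseq_rcons2.
- exfalso; apply: (avoid_contra av (_ : [:: 0; 1; 0; 2] \in P1)) => //.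
  apply: (contains_sub _ (red0102 (isT : 0 < 1) (isT : 1 < 2))).
  rewrite -[[:: 0; 1; 0; 2]]/(rcons [:: 0; 1; 0] 2); exact: subseq_rcons2.
Qed.

Lemma mem_map_cons (a e : nat) (y : seq nat) (L : seq (seq nat)) :
  (e :: y \in map (cons a) L) = (e == a) && (y \in L).
Proof.
apply/mapP/andP => [[z zL [-> ->]]|[/eqP -> yL]]; last by exists y.
by rewrite eqxx.
Qed.

Lemma nil_map_cons (a : nat) (L : seq (seq nat)) : ([::] \in map (cons a) L) = false.
Proof. by apply/mapP => [[]]. Qed.

Lemma cons_inj (a : nat) : injective (cons a).
Proof. by move=> s t []. Qed.

Fixpoint Gs (a m : nat) : seq (seq nat) :=
  if m is m'.+1 then map (cons a) (Gs a m') ++ map (cons a.+1) (Gs a.+1 m')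
  else [:: [::]].

Lemma mem_Gs m a y : (y \in Gs a m) = (size y == m) && path step a y.
Proof.
elim: m a y => [|m IH] a [|e y] //=; rewrite ?mem_cat ?nil_map_cons //.
rewrite !mem_map_cons !IH eqSS /step.
case: (eqVneq e a) => [->|ea] /=; first by rewrite (ltn_eqF (ltnSn a)) /= orbF.
by case: (eqVneq e a.+1) => [->|eb] //=; rewrite andbF.
Qed.

Lemma uniq_Gs m a : uniq (Gs a m).
Proof.
elim: m a => [|m IH] a //=; rewrite cat_uniq !(map_inj_uniq (@cons_inj _)) !IH /= andbT.
apply/hasPn => z /mapP [y _ ->]; rewrite mem_map_cons.
by rewrite (gtn_eqF (ltnSn a)).
Qed.

Lemma size_Gs m a : size (Gs a m) = 2 ^ m.
Proof. by elim: m a => [|m IH] a //=; rewrite size_cat !size_map !IH expnS mul2n addnn. Qed.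

Definition Gl n := map (cons 0) (Gs 0 n.-1).

Lemma mem_Gl n x : 0 < n -> (x \in Gl n) = (size x == n) && spath x.
Proof.
case: n => // n _; case: x => [|e x]; first by rewrite nil_map_cons.
rewrite mem_map_cons mem_Gs /= eqSS.
by case: (eqVneq e 0) => [->|] //=; rewrite andbF.
Qed.

Fixpoint Tl (n : nat) : seq (seq nat) :=
  if n is n'.+1 then
    map (cons 0) (Tl n') ++ [seq 0 :: nseq b 1 ++ nseq (n' - b) 0 | b <- iota 1 n'.-1]
  else [::].

Lemma mem_Tl_shape n x : x \in Tl n -> size x = n /\ shapeII x.
Proof.
elim: n x => [|n IH] x //=; rewrite mem_cat => /orP[|].
  case: x => [|e x]; first by rewrite nil_map_cons.
  rewrite mem_map_cons => /andP[/eqP -> /IH [sx [a [b [c [a0 b0 c0 ex]]]]]].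
  split; first by rewrite /= sx.
  by exists a.+1, b, c; split => //; rewrite ex.
move=> /mapP [b]; rewrite mem_iota => /andP[b1 bn] ->.
have c0 : 0 < n - b by lia.
split; first by rewrite /= size_cat !size_nseq; lia.
by exists 1, b, (n - b); split.
Qed.

Lemma shape_mem_Tl n x : size x = n -> shapeII x -> x \in Tl n.
Proof.
elim: n x => [|n IH] x sx [a [b [c [a0 b0 c0 ex]]]]; subst x.
  by move: sx; rewrite !size_cat !size_nseq; case: a a0.
case: a a0 sx => // [[|a]] _ sx /=; rewrite mem_cat.
  apply/orP; right; apply/mapP; exists b.
    rewrite mem_iota; move: sx; rewrite /= !size_cat !size_nseq; lia.
  move: sx; rewrite /= !size_cat !size_nseq => [[<-]].
  by rewrite addKn.
apply/orP; left; rewrite mem_map_cons eqxx /=; apply: IH.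
  by move: sx => /= [].
by exists a.+1, b, c.
Qed.

Lemma uniq_Tl n : uniq (Tl n).
Proof.
elim: n => [|n IH] //=; rewrite cat_uniq (map_inj_uniq (@cons_inj _)) IH /=.
apply/andP; split.
  apply/hasPn => z /mapP [b]; rewrite mem_iota => /andP[b1 _] -> .
  rewrite mem_map_cons eqxx /=; apply/negP => /mem_Tl_shape [_ [a [b' [c [a0 _ _]]]]].
  by case: a a0 => // a _; case: b b1.
rewrite map_inj_in_uniq ?iota_uniq // => b1 b2 _ _ [] e.
have := congr1 (count (pred1 1)) e.
by rewrite !count_cat !count_nseq /= !mul1n !mul0n !addn0.
Qed.

Lemma size_Tl n : size (Tl n) = 'C(n.-1, 2).
Proof.
elim: n => [|n IH] //=; rewrite size_cat size_map IH size_map size_iota.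
by case: n {IH} => [|n] //=; rewrite binS bin1.
Qed.

Lemma II_not_sorted x : shapeII x -> sorted leq x = false.
Proof.
case=> a [b [c [a0 b0 c0 ->]]]; apply/negP => so.
have : subseq [:: 1; 0] (nseq a 0 ++ nseq b 1 ++ nseq c 0).
  rewrite -[[:: 1; 0]]/([::] ++ [:: 1] ++ [:: 0]).
  by apply: cat_subseq; [exact: sub0seq| apply: cat_subseq]; rewrite sub1seq mem_nseq ?b0 ?c0.
by move/subseq_sorted => /(_ _ leq_trans so).
Qed.

Lemma aP1 n : 0 < n -> aP P1 n = 2 ^ n.-1 + 'C(n.-1, 2).
Proof.
move=> n0; rewrite (@aP_size _ _ (Gl n ++ Tl n)).
- by rewrite size_cat size_map size_Gs size_Tl.
- rewrite cat_uniq (map_inj_uniq (@cons_inj _)) uniq_Gs uniq_Tl /= andbT.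
  apply/hasPn => x /mem_Tl_shape [_ hx]; rewrite mem_Gl //.
  by apply/negP => /andP[_ /spath_sorted]; rewrite II_not_sorted.
- move=> x; rewrite mem_cat mem_Gl // => /orP[/andP[/eqP -> _] //|].
  by case/mem_Tl_shape.
move=> x sx; rewrite mem_cat mem_Gl // sx eqxx /=.
apply/idP/idP => [/andP[ax vx]|].
  have xn : x != [::] by apply/eqP => ex; move: sx n0; rewrite ex => <-.
  case: (P1_char xn ax vx) => [-> //|hx]; apply/orP; right.
  exact: shape_mem_Tl.
case/orP => [sx'|/mem_Tl_shape [_ hx]].
  by apply/andP; split; [apply: spath_ascent | apply: spath_avoid1].
by apply/andP; split; [apply: II_ascent | apply: II_avoid1].
Qed.

Notation P2 := [:: [:: 0; 1; 0; 2]; [:: 0; 1; 1; 2]; [:: 0; 1; 2; 0]; [:: 0; 1; 2; 1]].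

Definition shapeB (x : seq nat) := (head 1 x == 0) && all (fun y => y <= 1) x.
Definition shapeC (x : seq nat) := exists a k b,
  2 <= k /\ x = nseq a.+1 0 ++ iota 1 k ++ nseq b k.

Lemma path_iota m k : path step m (iota m.+1 k).
Proof. by elim: k m => //= k IH m; rewrite IH /step eqxx orbT. Qed.

Lemma last_iota m k : last m (iota m.+1 k) = m + k.
Proof. by elim: k m => [|k IH] m /=; rewrite ?addn0 // IH addnS. Qed.

Lemma C_spath a k b : spath (nseq a.+1 0 ++ iota 1 k ++ nseq b k).
Proof.
rewrite [spath _]/= cat_path path_nseq last_nseq cat_path path_iota.
by rewrite last_iota path_nseq.
Qed.

Lemma C_last a k b : last 0 (nseq a.+1 0 ++ iota 1 k ++ nseq b k) = k.
Proof. by rewrite !last_cat last_nseq last_iota last_nseq. Qed.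

Lemma B_ascent x : shapeB x -> is_ascent_seq x.
Proof.
elim/last_ind: x => [|y v IH] //.
case: (altP (y =P [::])) => [->|yn]; first by rewrite ascent1 /shapeB /= andbT => /andP[].
have hy : head 1 (rcons y v) = head 1 y by move: yn; clear; case: y.
rewrite /shapeB hy all_rcons => /and3P[h0 v1 ay].
rewrite ascent_rcons // IH /shapeB ?h0 ?ay //=.
exact: leq_trans v1 _.
Qed.

Lemma B_avoid2 x : shapeB x -> avoids_all P2 x.
Proof.
case/andP => _ bx.
rewrite /avoids_all /=; rewrite !andbT; apply/and4P; split; apply/negP;
  move=> /contains4 [a [b [c [d [ss [e0 e1 e2 e3]]]]]].
- by have := bin_rf bx ss (m4d _ _ _ _); rewrite e3.
- by have := bin_rf bx ss (m4d _ _ _ _); rewrite e3.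
- by have := bin_rf bx ss (m4c _ _ _ _); rewrite e2.
- by have := bin_rf bx ss (m4c _ _ _ _); rewrite e2.
Qed.

Lemma C_avoid2 x : shapeC x -> avoids_all P2 x.
Proof.
move=> hx; case: (hx) => a0 [k [b0 [k2 ex]]].
have sx : spath x by rewrite ex C_spath.
have so := spath_sorted sx.
rewrite /avoids_all /=; rewrite !andbT; apply/and4P; split; apply/negP;
  move=> /contains4 [a [b [c [d [ss [e0 e1 e2 e3]]]]]];
  have [ab bc cd] := sorted4 so ss.
- have : rf [:: a; b; c; d] c < rf [:: a; b; c; d] b by rewrite e1 e2.
  by move/(rf_ltE (m4c _ _ _ _)); rewrite ltnNge bc.
- have sa := m4a a b c d; have sb := m4b a b c d.
  have sc := m4c a b c d; have sd := m4d a b c d.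
  have ab' : a < b by apply: (rf_ltE sa); rewrite e0 e1.
  have bc' : b = c by apply: (rf_eqE sb sc); rewrite e1 e2.
  have bd : b < d by apply: (rf_ltE sb); rewrite e1 e3.
  have dk : d <= k by rewrite -(C_last a0 k b0) -ex; apply: spath_le sx _; exact: (mem_subseq ss).
  have := leq_count_subseq (pred1 b) ss.
  rewrite ex !count_cat !count_nseq (count_uniq_mem b (iota_uniq 1 k)) -bc' /=.
  rewrite eqxx (ltn_eqF ab') (gtn_eqF bd).
  have -> : (0 == b) = false by apply/negbTE; rewrite eq_sym -lt0n (leq_ltn_trans _ ab').
  have -> : (k == b) = false by apply/negbTE; rewrite eq_sym ltn_eqF // (leq_trans bd dk).
  rewrite mem_iota /=; lia.
- have : rf [:: a; b; c; d] d < rf [:: a; b; c; d] c by rewrite e3 e2.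
  by move/(rf_ltE (m4d _ _ _ _)); rewrite ltnNge cd.
- have : rf [:: a; b; c; d] d < rf [:: a; b; c; d] c by rewrite e3 e2.
  by move/(rf_ltE (m4d _ _ _ _)); rewrite ltnNge cd.
Qed.

Lemma bin_no10 s : all (fun y => y <= 1) s -> ~~ subseq [:: 1; 0] s ->
  exists a b, s = nseq a 0 ++ nseq b 1.
Proof.
elim: s => [|e s IH]; first by exists 0, 0.
case: e => [|[|e]] //= bs.
  by move=> /(IH bs) [a [b ->]]; exists a.+1, b.
rewrite sub1seq => ns; exists 0, (size s).+1 => /=; congr (_ :: _).
apply/all_pred1P/allP => z zs; have := allP bs z zs.
by case: z zs => [|[|z]] //= zs; rewrite zs in ns.
Qed.

Lemma asc_0s1 a : asc (nseq a.+1 0 ++ [:: 1]) = 1.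
Proof.
rewrite -[nseq a.+1 0]/(0 :: nseq a 0) cat_cons asc_cat last_nseq.
by rewrite (asc_nseq a.+1 0).
Qed.

Lemma P2_char x : x != [::] -> is_ascent_seq x -> avoids_all P2 x ->
  shapeB x \/ shapeC x.
Proof.
elim/last_ind: x => [|y v IH] // _.
case: (altP (y =P [::])) => [->|yn].
  by rewrite ascent1 => /eqP -> _; left.
rewrite ascent_rcons // => /andP[ay vb] av.
have ay' := avoids_rcons av.
have hy : head 1 (rcons y v) = head 1 y by move: yn; clear; case: y.
case: (IH yn ay ay') => [/andP[h0 hb]|[a [k [b [k2 ey]]]]].
  case: (leqP v 1) => v1.
    by left; rewrite /shapeB hy h0 all_rcons v1.
  case: y yn h0 hb ay ay' hy av vb {IH} => // e y _ h0 /andP[_ hb] ay ay' hy av vb.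
  have e0 : e = 0 by apply/eqP. subst e.
  case: (boolP (subseq [:: 1; 0] y)) => s10.
    exfalso; apply: (avoid_contra av (_ : [:: 0; 1; 0; 2] \in P2)) => //.
    apply: (contains_sub _ (red0102 (isT : 0 < 1) v1)).
    rewrite -[[:: 0; 1; 0; v]]/(rcons [:: 0; 1; 0] v); apply: subseq_rcons2.
    by rewrite sub00.
  have [a [b ey]] := bin_no10 hb s10; subst y.
  clear ay ay' hy hb h0; case: b s10 vb av => [|[|b]] s10 vb av.
  - by move: vb; rewrite cats0 -[0 :: nseq a 0]/(nseq a.+1 0) asc_nseq => h; move: v1; rewrite ltnNge h.
  - right; have v2 : v = 2.
      by apply/eqP; rewrite eqn_leq v1 andbT; move: vb; rewrite -[0 :: _]/(nseq a.+1 0 ++ [:: 1]) asc_0s1.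
    subst v; exists a, 2, 0; split => //.
    by rewrite -cats1 /= -catA.
  - exfalso; apply: (avoid_contra av (_ : [:: 0; 1; 1; 2] \in P2)) => //.
    apply: (contains_sub _ (red0112 (isT : 0 < 1) v1)).
    rewrite -[[:: 0; 1; 1; v]]/(rcons [:: 0; 1; 1] v); apply: subseq_rcons2.
    rewrite sub00 -[[:: 1; 1]]/([::] ++ [:: 1; 1]); apply: cat_subseq; first exact: sub0seq.
    by rewrite -[nseq b.+2 1]/([:: 1; 1] ++ nseq b 1) prefix_subseq.
have sy : spath y by rewrite ey C_spath.
have ly : last 0 y = k by rewrite ey C_last.
rewrite spath_asc // ly in vb.
case: (ltngtP v k) => vk.
- exfalso; case: (posnP v) => v0.
    subst v; apply: (avoid_contra av (_ : [:: 0; 1; 2; 0] \in P2)) => //.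
    apply: (contains_sub _ (red0120 (isT : 0 < 1) k2)).
    rewrite -[[:: 0; 1; k; 0]]/(rcons [:: 0; 1; k] 0); apply: subseq_rcons2.
    apply: spath_subseq sy _ _ => //=; first by rewrite k2.
    by rewrite ly leqnn !andbT ltnW.
  apply: (avoid_contra av (_ : [:: 0; 1; 2; 1] \in P2)) => //.
  apply: (contains_sub _ (red0121 v0 vk)).
  rewrite -[[:: 0; v; k; v]]/(rcons [:: 0; v; k] v); apply: subseq_rcons2.
  apply: spath_subseq sy _ _ => //=; first by rewrite v0 vk.
  by rewrite ly leqnn (ltnW vk).
- have ev : v = k.+1 by apply/eqP; rewrite eqn_leq vb vk.
  subst v; case: b ey => [|b] ey.
    right; exists a, k.+1, 0; split; first exact: leqW.
    rewrite ey !cats0 -cats1 -catA; congr (_ ++ _); by rewrite -[k.+1]addn1 (iotaD 1 k 1) add1n addn1.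
  exfalso; apply: (avoid_contra av (_ : [:: 0; 1; 1; 2] \in P2)) => //.
  apply: (contains_sub _ (red0112 (leq_trans _ k2) (ltnSn k))) => //.
  rewrite -[[:: 0; k; k; k.+1]]/(rcons [:: 0; k; k] k.+1); apply: subseq_rcons2.
  rewrite ey catA -[[:: 0; k; k]]/(([:: 0] ++ [:: k]) ++ [:: k]).
  apply: cat_subseq; first apply: cat_subseq; rewrite sub1seq ?mem_nseq ?mem_iota //=.
  by rewrite (leq_trans _ k2).
- subst v; right; exists a, k, b.+1; split => //.
  by rewrite ey !rcons_cat -nseqSr.
Qed.

Fixpoint Bin (m : nat) : seq (seq nat) :=
  if m is m'.+1 then map (cons 0) (Bin m') ++ map (cons 1) (Bin m') else [:: [::]].

Lemma mem_Bin m y : (y \in Bin m) = (size y == m) && all (fun z => z <= 1) y.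
Proof.
elim: m y => [|m IH] [|e y] //=; rewrite ?mem_cat ?nil_map_cons //.
rewrite !mem_map_cons !IH eqSS.
by case: e => [|[|e]] //=; rewrite ?andbF ?orbF.
Qed.

Lemma uniq_Bin m : uniq (Bin m).
Proof.
elim: m => [|m IH] //=; rewrite cat_uniq !(map_inj_uniq (@cons_inj _)) IH /= andbT.
by apply/hasPn => z /mapP [y _ ->]; rewrite mem_map_cons.
Qed.

Lemma size_Bin m : size (Bin m) = 2 ^ m.
Proof. by elim: m => [|m IH] //=; rewrite size_cat !size_map IH expnS mul2n addnn. Qed.

Definition Bl n := map (cons 0) (Bin n.-1).

Lemma mem_Bl n x : 0 < n -> (x \in Bl n) = (size x == n) && shapeB x.
Proof.
case: n => // n _; case: x => [|e x]; first by rewrite nil_map_cons.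
rewrite mem_map_cons mem_Bin /shapeB /= eqSS.
by case: (eqVneq e 0) => [->|] //=; rewrite andbF.
Qed.

Fixpoint Ul (n : nat) : seq (seq nat) :=
  if n is n'.+1 then
    map (cons 0) (Ul n') ++ [seq 0 :: iota 1 k ++ nseq (n' - k) k | k <- iota 2 n'.-1]
  else [::].

Lemma mem_Ul_shape n x : x \in Ul n -> size x = n /\ shapeC x.
Proof.
elim: n x => [|n IH] x //=; rewrite mem_cat => /orP[|].
  case: x => [|e x]; first by rewrite nil_map_cons.
  rewrite mem_map_cons => /andP[/eqP -> /IH [sx [a [k [b [k2 ex]]]]]].
  split; first by rewrite /= sx.
  by exists a.+1, k, b; split => //; rewrite ex.
move=> /mapP [k]; rewrite mem_iota => /andP[k2 kn] ->.
split; first by rewrite /= size_cat size_iota size_nseq; lia.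
by exists 0, k, (n - k).
Qed.

Lemma shape_mem_Ul n x : size x = n -> shapeC x -> x \in Ul n.
Proof.
elim: n x => [|n IH] x sx [a [k [b [k2 ex]]]]; subst x; first by [].
case: a sx => [|a] sx /=; rewrite mem_cat.
  apply/orP; right; apply/mapP; exists k.
    rewrite mem_iota; move: sx; rewrite /= !size_cat size_iota !size_nseq; lia.
  move: sx; rewrite /= !size_cat size_iota !size_nseq => [[<-]].
  by rewrite addKn.
apply/orP; left; rewrite mem_map_cons eqxx /=; apply: IH.
  by move: sx => /= [].
by exists a, k, b.
Qed.

Lemma uniq_Ul n : uniq (Ul n).
Proof.
elim: n => [|n IH] //=; rewrite cat_uniq (map_inj_uniq (@cons_inj _)) IH /=.
apply/andP; split.
  apply/hasPn => z /mapP [k]; rewrite mem_iota => /andP[k2 _] -> .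
  rewrite mem_map_cons eqxx /=; apply/negP => /mem_Ul_shape [_ [a [k' [b [_ e]]]]].
  by case: k k2 e => [|[|k]].
rewrite map_inj_in_uniq ?iota_uniq // => k1 k2; rewrite !mem_iota => /andP[h1 _] /andP[h2 _] e.
have := congr1 (last 0) e.
rewrite /= !last_cat -!/(last 0 (_ :: _)).
have l k : 0 < k -> last (last 0 (iota 1 k)) (nseq (n - k) k) = k.
  by move=> k0; rewrite -[1]/(0.+1) last_iota last_nseq.
by rewrite !l //; lia.
Qed.

Lemma size_Ul n : size (Ul n) = 'C(n.-1, 2).
Proof.
elim: n => [|n IH] //=; rewrite size_cat size_map IH size_map size_iota.
by case: n {IH} => [|n] //=; rewrite binS bin1.
Qed.

Lemma aP2 n : 0 < n -> aP P2 n = 2 ^ n.-1 + 'C(n.-1, 2).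
Proof.
move=> n0; rewrite (@aP_size _ _ (Bl n ++ Ul n)).
- by rewrite size_cat size_map size_Bin size_Ul.
- rewrite cat_uniq (map_inj_uniq (@cons_inj _)) uniq_Bin uniq_Ul /= andbT.
  apply/hasPn => x /mem_Ul_shape [_ [a [k [b [k2 ex]]]]]; rewrite mem_Bl //.
  apply/negP => /andP[_ /andP[_ /allP bx]].
  have : k <= 1 by apply: bx; rewrite ex !mem_cat mem_iota; apply/orP; right; apply/orP; left; lia.
  by rewrite leqNgt (leq_trans _ k2).
- move=> x; rewrite mem_cat mem_Bl // => /orP[/andP[/eqP -> _] //|].
  by case/mem_Ul_shape.
move=> x sx; rewrite mem_cat mem_Bl // sx eqxx /=.
apply/idP/idP => [/andP[ax vx]|].
  have xn : x != [::] by apply/eqP => ex; move: sx n0; rewrite ex => <-.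
  case: (P2_char xn ax vx) => [-> //|hx]; apply/orP; right.
  exact: shape_mem_Ul.
case/orP => [sx'|/mem_Ul_shape [_ hx]].
  by apply/andP; split; [apply: B_ascent | apply: B_avoid2].
apply/andP; split; last exact: C_avoid2.
by case: hx => a [k [b [_ ->]]]; apply: spath_ascent; exact: C_spath.
Qed.

Theorem theorem5p2 (n : nat) : 1 <= n ->
  aP [:: [:: 0; 1; 0; 1]; [:: 0; 1; 0; 2]; [:: 0; 1; 2; 0]; [:: 0; 1; 2; 1]] n
    = 2 ^ n.-1 + 'C(n.-1, 2)
  /\ aP [:: [:: 0; 1; 0; 2]; [:: 0; 1; 1; 2]; [:: 0; 1; 2; 0]; [:: 0; 1; 2; 1]] n
    = 2 ^ n.-1 + 'C(n.-1, 2).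
Proof.
move=> n0; split; [exact: aP1 | exact: aP2].
Qed.
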